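(* Let $n\ge2$, let $A\in\mathbb R^{n\times n}$ have $A_{i,i+1}=1$ ($i=1,\dots,n-1$) and all other entries $0$, and $b=(0,\dots,0,1)^T$ with entries $b_i$. Let $F_i,\bar F_i,P_i$ ($i=1,\dots,n$) and $Q$ be symmetric real $n\times n$ matrices, $P_{n+1}=0$, and $G,\bar G\in\mathbb R^{n\times n}$ with $i$th rows $G_i,\bar G_i$, such that for $i=1,\dots,n$ $$\bar F_i = F_i + P_{i+1} - \mathbf LP_i - b_iQ,\qquad \bar G_i = G_i - 2b^TP_iA.$$ Then $$\mathbf X_0P_1A = \sum_{i=1}^{n-1}\mathbf X_iF_iA + \tfrac12G - \sum_{i=1}^{n-1}\mathbf X_i\bar F_iA - \tfrac12\bar G.$$
   Context: Here $\mathbf L:\mathbb R^{n\times n}\to\mathbb R^{n\times n}$ is $\mathbf LP=A^TPA$, with $\mathbf L^0P=P$ and $\mathbf L^{k+1}=\mathbf L\circ\mathbf L^k$. $\mathbf X_0P$ is the $n\times n$ matrix whose $k$th row ($k=1,\dots,n$) is the $n$th row of $\mathbf L^{k-1}P$, and $\mathbf X_iP=(A^T)^i\mathbf X_0P$ for $i\ge1$. *)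

(* Defs.v *)
From HB Require Import structures.
From mathcomp Require Import all_boot all_order all_algebra.
Set Implicit Arguments. Unset Strict Implicit. Unset Printing Implicit Defensive.
Import Order.TTheory GRing.Theory Num.Theory.
Local Open Scope ring_scope.

(* Indices: the paper's 1-based index i (1..n) of rows/columns corresponds to
   the 0-based ordinal i-1 : 'I_n. Families F_i, P_i, ... are nat-indexed. *)

Section Defs.
Variables (R : realFieldType) (n : nat).

Definition Ashift : 'M[R]_n := \matrix_(i < n, j < n) ((j : nat) == i.+1)%:R.

Definition bvec : 'cV[R]_n := \col_(i < n) ((i : nat) == n.-1)%:R.

(* b_i for the paper's 1-based index i *)
Definition bentry (i : nat) : R := (i == n)%:R.

Definition Lop (P : 'M[R]_n) : 'M[R]_n := Ashift^T *m P *m Ashift.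

Definition lastrow (M : 'M[R]_n) : 'rV[R]_n :=
  \row_(j < n) \sum_(l < n | (l : nat) == n.-1) M l j.

Definition X0 (P : 'M[R]_n) : 'M[R]_n :=
  \matrix_(k < n) lastrow (iter k Lop P).

Definition Xop (i : nat) (P : 'M[R]_n) : 'M[R]_n :=
  iter i (mulmx Ashift^T) (X0 P).

End Defs.

(* Main.v *)
Require Import Defs.
From HB Require Import structures.
From mathcomp Require Import all_boot all_order all_algebra.
Import Order.TTheory GRing.Theory Num.Theory.
Local Open Scope ring_scope.

Section H.
Variables (R : realFieldType) (n : nat).
Local Notation A := (Ashift R n).
Local Notation L := (@Lop R n).

Lemma iterLD m (X Y : 'M[R]_n) : iter m L (X + Y) = iter m L X + iter m L Y.
Proof. elim: m => //= m ->; by rewrite /Lop !mulmxDr !mulmxDl. Qed.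

Lemma iterLN m (X : 'M[R]_n) : iter m L (- X) = - iter m L X.
Proof. elim: m => //= m ->; by rewrite /Lop mulmxN mulNmx. Qed.

Lemma lastrowD (X Y : 'M[R]_n) j : lastrow (X + Y) 0 j = lastrow X 0 j + lastrow Y 0 j.
Proof. by rewrite !mxE -big_split /=; apply: eq_bigr => l _; rewrite mxE. Qed.

Lemma lastrowN (X : 'M[R]_n) j : lastrow (- X) 0 j = - lastrow X 0 j.
Proof. by rewrite !mxE -sumrN; apply: eq_bigr => l _; rewrite mxE. Qed.

Lemma XopE i (P : 'M[R]_n) (k j : 'I_n) :
  Xop i P k j = if (i <= k)%N then lastrow (iter (k - i) L P) 0 j else 0.
Proof.
elim: i k j => [|i IH] k j.
  by rewrite /Xop /= /X0 !mxE subn0 .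
rewrite /Xop iterS -/(Xop i P) mxE.
case: k => [[|k] hk] /=.
  rewrite big1 // => l _; rewrite !mxE /=.
  by rewrite mul0r.
have hk' : (k < n)%N by apply: ltnW.
rewrite (bigD1 (Ordinal hk')) //= big1 ?addr0.
  by rewrite !mxE eqxx mul1r IH ltnS subSS !mxE.
move=> l /negbTE hl; rewrite !mxE.
suff -> : (k.+1 == l.+1)%N = false by rewrite mul0r.
by rewrite eqSS; apply/negbTE/negP => /eqP e; move: hl; rewrite -val_eqE /= e eqxx.
Qed.
End H.

From mathcomp Require Import ring.

Lemma half_lemma (R : realFieldType) (V : lmodType R) (x y z w : V) :
  x + 2^-1 *: w - y - 2^-1 *: (w - 2 *: z) = x - y + z.
Proof.
rewrite scalerBr scalerA mulVf ?pnatr_eq0 // scale1r.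
rewrite opprB; set u := 2^-1 *: w.
by rewrite addrAC -(addrA x u) [u + _]addrC subrK addrAC.
Qed.

Theorem theorem4p6 (R : realFieldType) (n : nat) (hn : (2 <= n)%N)
    (F Fbar P : nat -> 'M[R]_n) (Q G Gbar : 'M[R]_n)
    (hF : forall i, (1 <= i <= n)%N -> (F i)^T = F i)
    (hFbar : forall i, (1 <= i <= n)%N -> (Fbar i)^T = Fbar i)
    (hP : forall i, (1 <= i <= n)%N -> (P i)^T = P i)
    (hQ : Q^T = Q)
    (hPn : P n.+1 = 0)
    (hFbarD : forall i, (1 <= i <= n)%N ->
       Fbar i = F i + P i.+1 - Lop (P i) - bentry R n i *: Q)
    (hGbarD : forall i : 'I_n,
       row i Gbar = row i G - 2 *: ((bvec R n)^T *m P i.+1 *m Ashift R n)) :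
  X0 (P 1%N) *m Ashift R n =
    \sum_(1 <= i < n) Xop i (F i) *m Ashift R n + 2^-1 *: G
    - \sum_(1 <= i < n) Xop i (Fbar i) *m Ashift R n - 2^-1 *: Gbar.
Proof.
set A := Ashift R n.
set D : 'M[R]_n := \matrix_(k < n) ((bvec R n)^T *m P k.+1).
have hGb : Gbar = G - 2 *: (D *m A).
  apply/row_matrixP => k; rewrite hGbarD; apply/rowP => j; rewrite !mxE; congr (_ - _ * _); apply: eq_bigr => l _; rewrite !mxE //.
rewrite hGb -!mulmx_suml half_lemma -mulmxBl -mulmxDl; congr (_ *m A).
apply/matrixP => k j; rewrite !mxE !summxE -sumrB.
pose g : nat -> R := fun i => lastrow (iter (k.+1 - i) (@Lop R n) (P i)) 0 j.
have hD : \sum_j0 (bvec R n)^T 0 j0 * P k.+1 j0 j = g k.+1.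
  rewrite /g subnn /lastrow /= mxE [RHS]big_mkcond /=; apply: eq_bigr => l _.
  by rewrite !mxE; case: eqP => _; rewrite ?mul1r ?mul0r.
have hL : \sum_(l < n | (l : nat) == n.-1) iter k (@Lop R n) (P 1%N) l j = g 1%N.
  by rewrite /g subn1 /lastrow /= mxE.
rewrite hD hL.
rewrite (eq_big_nat _ _ (F2 := fun i => - (if (i <= k)%N then g i.+1 - g i else 0))); last first.
  move=> i /andP[h1 h2].
  rewrite hFbarD; last by rewrite h1 ltnW.
  rewrite /bentry (ltn_eqF h2) scale0r subr0 !XopE.
  case: ifP => hik; last by rewrite subrr oppr0.
  rewrite /g subSS (subSn hik).
  rewrite !iterLD !iterLN -iterSr !lastrowD !lastrowN.
  ring.
have hk : (k < n)%N := ltn_ord k.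
rewrite sumrN (@big_cat_nat _ _ _ k.+1) //=.
have hz : \sum_(k.+1 <= i < n) (if (i <= k)%N then g i.+1 - g i else 0) = 0.
  rewrite big_nat_cond big1 // => i /andP[/andP[h _] _].
  by rewrite leqNgt h.
rewrite hz addr0.
rewrite (telescope_sumr_eq g) //; last first.
  by move=> i /andP[_ h]; rewrite ltnS in h; rewrite h.
by rewrite opprB subrK.
Qed.
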